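(* Let $\mu>0$, $T_s>0$, $T_w>0$ and $\sigma_{\mathrm{off}}\in[0,1)$. Define for $\rho\in(0,1)$ the function $f(\rho)=\dfrac{e^{-\mu\rho T_s}}{\mu\rho}$ and let $b=T_s+T_w$. Then $f''(\rho)\bigl(f(\rho)+b\bigr)\ge 2\bigl(f'(\rho)\bigr)^2$ for all $\rho\in(0,1)$; consequently the function $E(\rho)=1-(1-\sigma_{\mathrm{off}})(1-\rho)\dfrac{f(\rho)}{f(\rho)+T_s+T_w}$ is concave on $(0,1)$.
   Context: This is the normalized energy consumption $E(\rho)$ of an Energy Efficient Ethernet link at normalized load $\rho$ under the ''frame transmission'' policy with Poisson packet arrivals, where $f(\rho)$ is the mean time spent in the low-power state, $\mu^{-1}$ the mean packet transmission time, $T_s$, $T_w$ the sleep and wake transition times, and $\sigma_{\mathrm{off}}$ the relative power in the idle state. *)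

(* Defs.v *)
From Stdlib Require Import Reals.
From Coquelicot Require Import Coquelicot.
Open Scope R_scope.

(* Mean time spent in the low-power state: f(rho) = exp(-mu rho Ts)/(mu rho). *)
Definition eee_f (mu Ts : R) (rho : R) : R := exp (- mu * rho * Ts) / (mu * rho).

Definition eee_E (mu Ts Tw soff : R) (rho : R) : R :=
  1 - (1 - soff) * (1 - rho) * (eee_f mu Ts rho / (eee_f mu Ts rho + Ts + Tw)).

Definition concave_on_open (a b : R) (g : R -> R) : Prop :=
  forall x y t, a < x < b -> a < y < b -> 0 <= t <= 1 ->
    t * g x + (1 - t) * g y <= g (t * x + (1 - t) * y).

(* Main.v *)
Require Import Defs.
From Stdlib Require Import Reals Lra.
From Coquelicot Require Import Coquelicot.
Open Scope R_scope.

Lemma mvt01 (g g1 : R -> R) u v :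
  (forall x, 0<x<1 -> is_derive g x (g1 x)) -> 0 < u -> u <= v -> v < 1 ->
  exists c, u <= c <= v /\ g v - g u = g1 c * (v - u).
Proof.
  intros Hd Hu Huv Hv.
  destruct (MVT_gen g u v g1) as [c [Hc Heq]].
  - intros x Hx. apply Hd. rewrite Rmin_left in Hx by lra. rewrite Rmax_right in Hx by lra. lra.
  - intros x Hx. rewrite Rmin_left in Hx by lra. rewrite Rmax_right in Hx by lra.
    apply continuity_pt_filterlim. apply (ex_derive_continuous (K:=R_AbsRing) (V:=R_NormedModule)). exists (g1 x). apply Hd. lra.
  - exists c. rewrite Rmin_left in Hc by lra. rewrite Rmax_right in Hc by lra. split; auto.
Qed.

Lemma convex_lt (g g1 g2 : R -> R) :
  (forall x, 0<x<1 -> is_derive g x (g1 x)) ->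
  (forall x, 0<x<1 -> is_derive g1 x (g2 x)) ->
  (forall x, 0<x<1 -> 0 <= g2 x) ->
  forall x y t, 0<x -> x < y -> y<1 -> 0<=t<=1 ->
  g (t*x + (1-t)*y) <= t * g x + (1-t) * g y.
Proof.
  intros H1 H2 H3 x y t Hx Hxy Hy Ht.
  set (z := t*x + (1-t)*y).
  assert (Hz1 : x <= z) by (unfold z; nra).
  assert (Hz2 : z <= y) by (unfold z; nra).
  destruct (mvt01 g g1 x z H1) as [c1 [Hc1 E1]]; try lra.
  destruct (mvt01 g g1 z y H1) as [c2 [Hc2 E2]]; try lra.
  destruct (mvt01 g1 g2 c1 c2 H2) as [d [Hd E3]]; try lra.
  assert (0 <= g2 d) by (apply H3; lra).
  assert (0 <= g1 c2 - g1 c1) by (rewrite E3; nra).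
  assert (Ez1 : z - x = (1-t)*(y-x)) by (unfold z; ring).
  assert (Ez2 : y - z = t*(y-x)) by (unfold z; ring).
  rewrite Ez1 in E1. rewrite Ez2 in E2.
  assert (0 <= t*(1-t)*(y-x)) by (apply Rmult_le_pos; nra).
  nra.
Qed.

Lemma convex01 (g g1 g2 : R -> R) :
  (forall x, 0<x<1 -> is_derive g x (g1 x)) ->
  (forall x, 0<x<1 -> is_derive g1 x (g2 x)) ->
  (forall x, 0<x<1 -> 0 <= g2 x) ->
  forall x y t, 0<x<1 -> 0<y<1 -> 0<=t<=1 ->
  g (t*x + (1-t)*y) <= t * g x + (1-t) * g y.
Proof.
  intros H1 H2 H3 x y t Hx Hy Ht.
  destruct (Rtotal_order x y) as [Hl|[He|Hg]].
  - apply (convex_lt g g1 g2); auto; lra.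
  - subst. replace (t*y+(1-t)*y) with y by ring. lra.
  - replace (t*x+(1-t)*y) with ((1-t)*y + (1-(1-t))*x) by ring.
    replace (t * g x + (1 - t) * g y) with ((1-t)*g y + (1-(1-t))*g x) by ring.
    apply (convex_lt g g1 g2); auto; lra.
Qed.
Definition f1 mu Ts x := - exp(-mu*x*Ts) * (mu*Ts*x + 1) / (mu*x^2).
Definition f2 mu Ts x := exp(-mu*x*Ts) * ((mu*Ts*x)^2 + 2*(mu*Ts*x) + 2)/(mu*x^3).

Lemma d1 mu Ts x : 0 < mu -> 0 < x -> is_derive (eee_f mu Ts) x (f1 mu Ts x).
Proof.
  intros Hm Hx. unfold eee_f, f1. auto_derive.
  - apply Rgt_not_eq; repeat apply Rmult_lt_0_compat; lra.
  - field. split; apply Rgt_not_eq; repeat apply Rmult_lt_0_compat; lra.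
Qed.

Lemma d2 mu Ts x : 0 < mu -> 0 < x -> is_derive (f1 mu Ts) x (f2 mu Ts x).
Proof.
  intros Hm Hx. unfold f2, f1. auto_derive.
  - apply Rgt_not_eq; repeat apply Rmult_lt_0_compat; lra.
  - field. split; apply Rgt_not_eq; repeat apply Rmult_lt_0_compat; lra.
Qed.

Lemma Df mu Ts x : 0 < mu -> 0 < x -> Derive (eee_f mu Ts) x = f1 mu Ts x.
Proof. intros. apply is_derive_unique, d1; auto. Qed.

Lemma DDf mu Ts x : 0 < mu -> 0 < x -> Derive (Derive (eee_f mu Ts)) x = f2 mu Ts x.
Proof.
  intros Hm Hx. apply is_derive_unique.
  apply (is_derive_ext_loc (f1 mu Ts)).
  - apply (filter_imp (fun t => 0 < t)).
    + intros t Ht. symmetry. apply Df; auto.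
    + apply (open_gt 0 x Hx).
  - apply d2; auto.
Qed.

Lemma key mu Ts Tw x : 0 < mu -> 0 < Ts -> 0 < Tw -> 0 < x ->
  f2 mu Ts x * (eee_f mu Ts x + (Ts + Tw)) - 2 * (f1 mu Ts x)^2 >= 0.
Proof.
  intros Hm HT Hw Hx. unfold f1, f2, eee_f.
  set (E := exp (- mu * x * Ts)). set (a := mu*Ts*x).
  assert (HE : 0 < E) by apply exp_pos.
  assert (HE1 : E <= 1).
  { unfold E. rewrite <- exp_0. left; apply exp_increasing. assert (0<mu*x*Ts) by (repeat apply Rmult_lt_0_compat; lra); lra. }
  assert (Ha : 0 < a) by (unfold a; repeat apply Rmult_lt_0_compat; lra).
  set (b := Ts + Tw).
  assert (Hb : a <= b*mu*x) by (unfold a, b; assert (0 < Tw*mu*x) by (repeat apply Rmult_lt_0_compat; lra); nra).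
  replace (E * (a ^ 2 + 2 * a + 2) / (mu * x ^ 3) * (E / (mu * x) + b) -
    2 * (- E * (a + 1) / (mu * x ^ 2)) ^ 2)
  with (E * (b*mu*x*(a^2+2*a+2) - E*a*(a+2)) / (mu^2*x^4)).
  2:{ unfold a. field. split; apply Rgt_not_eq; repeat apply Rmult_lt_0_compat; lra. }
  apply Rle_ge. apply Rmult_le_pos.
  - apply Rmult_le_pos. lra.
    assert (a*(a+2) <= b*mu*x*(a^2+2*a+2)) by nra.
    assert (E*(a*(a+2)) <= a*(a+2)) by nra. nra.
  - left. apply Rinv_0_lt_compat. apply Rmult_lt_0_compat; apply pow_lt; lra.
Qed.

Lemma Fpos mu Ts x : 0 < mu -> 0 < x -> 0 < eee_f mu Ts x.
Proof. intros. unfold eee_f. apply Rdiv_lt_0_compat. apply exp_pos. nra. Qed.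

Definition h mu Ts Tw x := (1-x)*(eee_f mu Ts x/(eee_f mu Ts x+Ts+Tw)).
Definition h1 mu Ts Tw x := -(eee_f mu Ts x/(eee_f mu Ts x+Ts+Tw)) + (1-x)*((Ts+Tw)*f1 mu Ts x/(eee_f mu Ts x+Ts+Tw)^2).
Definition h2 mu Ts Tw x := -2*((Ts+Tw)*f1 mu Ts x/(eee_f mu Ts x+Ts+Tw)^2) + (1-x)*((Ts+Tw)*(f2 mu Ts x*(eee_f mu Ts x+Ts+Tw) - 2*f1 mu Ts x^2)/(eee_f mu Ts x+Ts+Tw)^3).

Ltac sides mu Ts x Hm Hx :=
  repeat split; try (exists (f1 mu Ts x); apply d1; auto; fail); try (exists (f2 mu Ts x); apply d2; auto; fail); try (apply Rgt_not_eq; repeat apply Rmult_lt_0_compat; lra); lra.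

Lemma dh mu Ts Tw x : 0 < mu -> 0 < Ts -> 0 < Tw -> 0 < x -> is_derive (h mu Ts Tw) x (h1 mu Ts Tw x).
Proof.
  intros Hm HT Hw Hx. pose proof (Fpos mu Ts x Hm Hx). unfold h, h1. auto_derive.
  - sides mu Ts x Hm Hx.
  - replace (Derive (fun x0 => eee_f mu Ts x0) x) with (f1 mu Ts x) by (symmetry; apply is_derive_unique, d1; auto).
    field. lra.
Qed.

Lemma dh1 mu Ts Tw x : 0 < mu -> 0 < Ts -> 0 < Tw -> 0 < x -> is_derive (h1 mu Ts Tw) x (h2 mu Ts Tw x).
Proof.
  intros Hm HT Hw Hx. pose proof (Fpos mu Ts x Hm Hx). unfold h1, h2. auto_derive.
  - sides mu Ts x Hm Hx.
  - replace (Derive (fun x0 => eee_f mu Ts x0) x) with (f1 mu Ts x) by (symmetry; apply is_derive_unique, d1; auto).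
    replace (Derive (fun x0 => f1 mu Ts x0) x) with (f2 mu Ts x) by (symmetry; apply is_derive_unique, d2; auto).
    field. lra.
Qed.

Lemma h2pos mu Ts Tw x : 0 < mu -> 0 < Ts -> 0 < Tw -> 0 < x < 1 -> 0 <= h2 mu Ts Tw x.
Proof.
  intros Hm HT Hw Hx. pose proof (Fpos mu Ts x Hm (proj1 Hx)).
  pose proof (key mu Ts Tw x Hm HT Hw (proj1 Hx)) as K.
  assert (Hf1 : f1 mu Ts x < 0).
  { unfold f1. unfold Rdiv. rewrite Ropp_mult_distr_l_reverse, Ropp_mult_distr_l_reverse.
    apply Ropp_lt_gt_0_contravar. apply Rmult_lt_0_compat.
    apply Rmult_lt_0_compat. apply exp_pos. assert (0 < mu*Ts*x) by (repeat apply Rmult_lt_0_compat; lra). lra.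
    apply Rinv_0_lt_compat. repeat apply Rmult_lt_0_compat; lra. }
  unfold h2. set (D := eee_f mu Ts x + Ts + Tw). 
  replace (eee_f mu Ts x + (Ts + Tw)) with D in K by (unfold D; ring).
  assert (HD : 0 < D) by (unfold D; lra).
  apply Rplus_le_le_0_compat.
  - unfold Rdiv. assert (0 < /D^2) by (apply Rinv_0_lt_compat, pow_lt; lra).
    assert (0 < (Ts+Tw) * - f1 mu Ts x) by (apply Rmult_lt_0_compat; lra). nra.
  - apply Rmult_le_pos. lra. unfold Rdiv. apply Rmult_le_pos.
    apply Rmult_le_pos; lra. left; apply Rinv_0_lt_compat, pow_lt; lra.
Qed.

Theorem mainTheorem3 (mu Ts Tw soff : R) :
  0 < mu -> 0 < Ts -> 0 < Tw -> 0 <= soff < 1 ->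
  (forall rho, 0 < rho < 1 ->
     Derive (Derive (eee_f mu Ts)) rho * (eee_f mu Ts rho + (Ts + Tw))
       >= 2 * (Derive (eee_f mu Ts) rho) ^ 2)
  /\ concave_on_open 0 1 (eee_E mu Ts Tw soff).
Proof.
  intros Hm HT Hw Hs. split.
  - intros rho Hr. rewrite DDf, Df by lra.
    pose proof (key mu Ts Tw rho Hm HT Hw (proj1 Hr)). lra.
  - intros x y t Hx Hy Ht.
    pose proof (convex01 (h mu Ts Tw) (h1 mu Ts Tw) (h2 mu Ts Tw)
      (fun z Hz => dh mu Ts Tw z Hm HT Hw (proj1 Hz))
      (fun z Hz => dh1 mu Ts Tw z Hm HT Hw (proj1 Hz))
      (fun z Hz => h2pos mu Ts Tw z Hm HT Hw Hz) x y t Hx Hy Ht) as C.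
    unfold eee_E. unfold h in C.
    set (z := t*x+(1-t)*y) in *.
    set (hx := eee_f mu Ts x / (eee_f mu Ts x + Ts + Tw)) in *.
    set (hy := eee_f mu Ts y / (eee_f mu Ts y + Ts + Tw)) in *.
    set (hz := eee_f mu Ts z / (eee_f mu Ts z + Ts + Tw)) in *.
    assert (0 <= 1 - soff) by lra.
    assert ((1-soff)*((1-z)*hz) <= (1-soff)*(t*((1-x)*hx) + (1-t)*((1-y)*hy))) by (apply Rmult_le_compat_l; lra).
    nra.
Qed.
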